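(* Let $w \in \mathfrak{S}_n$ and $i \in \textsf{supp}(w)$. If $i$ is unconfined in some reduced word $s$ of $w$, then the letter $i$ appears exactly once in every reduced word of $w$, and $i$ is unconfined in every reduced word of $w$.
   Context: $\sigma_i$ ($1\le i\le n-1$) is the simple transposition swapping $i$ and $i+1$; products are compositions of maps. A reduced word of $w$ is a word $i_1\cdots i_\ell$ of minimal length with $w=\sigma_{i_1}\cdots\sigma_{i_\ell}$; $R(w)$ is the set of reduced words. $\textsf{supp}(w)$ is the set of letters appearing in (any) reduced word of $w$. Given a reduced word $s$ of $w$ in which the letter $i$ appears exactly once, $i$ is called unconfined in $s$ if that occurrence of $i$ does not lie between two occurrences of $i+1$ in $s$ and does not lie between two occurrences of $i-1$ in $s$. *)

(* Defs.v *)
From mathcomp Require Import all_boot all_fingroup.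
Set Implicit Arguments. Unset Strict Implicit. Unset Printing Implicit Defensive.

(* Letters are natural numbers 1 <= i <= n-1; the letter i denotes the simple
   transposition sigma_i swapping i and i+1 (1-indexed), i.e. swapping the
   ordinals i-1 and i of 'I_n (0-indexed). *)
Definition valid_letter (n i : nat) : bool := (0 < i) && (i < n).

Definition sigma (n i : nat) : 'S_n :=
  match n as m return 'S_m with
  | 0 => 1%g
  | m.+1 => if valid_letter m.+1 i then tperm (inord i.-1 : 'I_m.+1) (inord i)
            else 1%g
  end.

(* Products are compositions of maps: word_perm [:: i1; ...; il] is the map
   sigma_{i1} o ... o sigma_{il}.  In MathComp, (p * q) x = q (p x), hence
   sigma_{i1} o rest = rest * sigma_{i1}. *)
Fixpoint word_perm (n : nat) (s : seq nat) : 'S_n :=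
  match s with
  | [::] => 1%g
  | i :: s' => (word_perm n s' * sigma n i)%g
  end.

Definition is_word_of (n : nat) (w : 'S_n) (s : seq nat) : Prop :=
  all (valid_letter n) s /\ word_perm n s = w.

Definition reduced_word (n : nat) (w : 'S_n) (s : seq nat) : Prop :=
  is_word_of w s /\ forall t, is_word_of w t -> size s <= size t.

Definition in_supp (n : nat) (w : 'S_n) (i : nat) : Prop :=
  exists s, reduced_word w s /\ i \in s.

Definition between (j i : nat) (s : seq nat) : bool :=
  (j \in take (index i s) s) && (j \in drop (index i s).+1 s).

(* i is unconfined in s (meant for words where i occurs exactly once). *)
Definition unconfined (i : nat) (s : seq nat) : bool :=
  ~~ between i.+1 i s && ~~ between i.-1 i s.

(* Main.v *)
Require Import Defs.
From mathcomp Require Import all_boot all_fingroup zify.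
Set Implicit Arguments. Unset Strict Implicit. Unset Printing Implicit Defensive.

Definition fs (j u : nat) := if u == j.-1 then j else if u == j then j.-1 else u.

Lemma sigmaE n j (x : 'I_n) : valid_letter n j -> nat_of_ord (sigma n j x) = fs j x.
Proof.
case: n x => [|m] x; first by case: x.
move=> Hv; rewrite /sigma Hv /fs.
move: Hv; rewrite /valid_letter => /andP[H0 H1].
have E1 : nat_of_ord (inord j.-1 : 'I_m.+1) = j.-1 by rewrite inordK //; lia.
have E2 : nat_of_ord (inord j : 'I_m.+1) = j by rewrite inordK //; lia.
case: tpermP => [->|->|Ha Hb]; rewrite ?E1 ?E2 ?eqxx //.
  by rewrite ifF //; apply/eqP; lia.
have Hx1 : (nat_of_ord x == j.-1) = false.
  apply/eqP => H; have Hx : x = inord j.-1 by apply: val_inj; rewrite /= E1.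
  exact: Ha Hx.
have Hx2 : (nat_of_ord x == j) = false.
  apply/eqP => H; have Hx : x = inord j by apply: val_inj; rewrite /= E2.
  exact: Hb Hx.
by rewrite Hx1 Hx2.
Qed.

Lemma word_perm_cat n a c : word_perm n (a ++ c) = (word_perm n c * word_perm n a)%g.
Proof. elim: a => [|h a IH] /=; first by rewrite mulg1. by rewrite IH mulgA. Qed.

Lemma word_perm_cons n j c x : word_perm n (j :: c) x = sigma n j (word_perm n c x).
Proof. by rewrite /= permM. Qed.

Lemma pres n (k : nat) a (x : 'I_n) : all (valid_letter n) a -> k \notin a ->
  (nat_of_ord (word_perm n a x) < k) = (x < k).
Proof.
elim: a => [|h a IH]; first by move=> *; rewrite /= perm1. move=> /= /andP[Hh Ha]; rewrite inE negb_or => /andP[Hk Hka].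
rewrite permM sigmaE // -IH // /fs.
move: Hh Hk; rewrite /valid_letter => /andP[H0 H1] /eqP Hk.
case: eqP => [->|_]; first lia.
case: eqP => [->|_] //; lia.
Qed.

Lemma fixk n (k : nat) a (x : 'I_n) : all (valid_letter n) a -> k \notin a -> k.+1 \notin a ->
  nat_of_ord x = k -> word_perm n a x = x.
Proof.
elim: a => [|h a IH]; first by move=> *; rewrite /= perm1. move=> /= /andP[Hh Ha]; rewrite !inE !negb_or => /andP[Hk Hka] /andP[Hk1 Hk1a] Hx.
rewrite permM IH //; apply: val_inj => /=; rewrite sigmaE // /fs Hx.
move: Hh Hk Hk1; rewrite /valid_letter => /andP[H0 H1] /eqP Hk /eqP Hk1.
case: eqP => [E|_]; first lia. case: eqP => [E|_] //; lia.
Qed.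


Definition invp n (p : 'S_n) : {set 'I_n * 'I_n} :=
  [set xy : 'I_n * 'I_n | (xy.1 < xy.2) && (p xy.2 < p xy.1)].
Definition ninv n (p : 'S_n) := #|invp p|.

Lemma eq_pos n (p : 'S_n) a x (k : nat) : nat_of_ord (p a) = k ->
  (nat_of_ord (p x) == k) = (x == a).
Proof.
move=> Ha; rewrite -Ha; apply/eqP/eqP => [H|->] //.
by apply: (@perm_inj _ p); apply: val_inj.
Qed.

Lemma step_mem n (p : 'S_n) j x y : valid_letter n j ->
  ((x, y) \in invp (p * sigma n j)%g) =
  ((x < y) && (fs j (p y) < fs j (p x))).
Proof. by move=> Hv; rewrite !inE /= !permM !sigmaE. Qed.

Lemma invpE n (p : 'S_n) x y : ((x, y) \in invp p) = (x < y) && (p y < p x).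
Proof. by rewrite inE. Qed.

Lemma stepU n (p : 'S_n) j a b : valid_letter n j ->
  nat_of_ord (p a) = j.-1 -> nat_of_ord (p b) = j -> a < b ->
  invp (p * sigma n j)%g = (a, b) |: invp p /\ (a, b) \notin invp p.
Proof.
move=> Hv Ha Hb Hab; have Hj : 0 < j by case/andP: Hv.
split; last by rewrite invpE Ha Hb; lia.
apply/setP => -[x y]; rewrite step_mem // in_setU1 invpE /fs xpair_eqE.
have Fxa := eq_pos x Ha; have Fxb := eq_pos x Hb.
have Fya := eq_pos y Ha; have Fyb := eq_pos y Hb.
rewrite Fxa Fxb Fya Fyb.
have Eab : (a == b) = false by apply/eqP => E; rewrite E ltnn in Hab.
have Eba : (b == a) = false by rewrite eq_sym.
case: (eqVneq x a) => [?|nxa]; case: (eqVneq x b) => [?|nxb];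
case: (eqVneq y a) => [?|nya]; case: (eqVneq y b) => [?|nyb]; try subst x; try subst y;
rewrite ?eqxx ?Eab ?Eba ?Ha ?Hb;
try rewrite (negbTE nxa) in Fxa; try rewrite (negbTE nxb) in Fxb;
try rewrite (negbTE nya) in Fya; try rewrite (negbTE nyb) in Fyb; try lia.
all: by subst; rewrite ltnn in Hab.
Qed.

Lemma stepD n (p : 'S_n) j a b : valid_letter n j ->
  nat_of_ord (p a) = j.-1 -> nat_of_ord (p b) = j -> b < a ->
  invp (p * sigma n j)%g = invp p :\ (b, a) /\ (b, a) \in invp p.
Proof.
move=> Hv Ha Hb Hab; have Hj : 0 < j by case/andP: Hv.
split; last by rewrite invpE Ha Hb Hab; lia.
apply/setP => -[x y]; rewrite step_mem // in_setD1 invpE /fs xpair_eqE.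
have Fxa := eq_pos x Ha; have Fxb := eq_pos x Hb.
have Fya := eq_pos y Ha; have Fyb := eq_pos y Hb.
rewrite Fxa Fxb Fya Fyb.
have Eab : (a == b) = false by apply/eqP => E; rewrite E ltnn in Hab.
have Eba : (b == a) = false by rewrite eq_sym.
case: (eqVneq x a) => [?|nxa]; case: (eqVneq x b) => [?|nxb];
case: (eqVneq y a) => [?|nya]; case: (eqVneq y b) => [?|nyb]; try subst x; try subst y;
rewrite ?eqxx ?Eab ?Eba ?Ha ?Hb;
try rewrite (negbTE nxa) in Fxa; try rewrite (negbTE nxb) in Fxb;
try rewrite (negbTE nya) in Fya; try rewrite (negbTE nyb) in Fyb; try lia.
all: by subst; rewrite ltnn in Hab.
Qed.

Lemma exists_ab n (p : 'S_n) j : valid_letter n j ->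
  exists a b, nat_of_ord (p a) = j.-1 /\ nat_of_ord (p b) = j.
Proof.
case/andP=> H0 H1.
have H2 : j.-1 < n by lia.
exists ((p^-1)%g (Ordinal H2)), ((p^-1)%g (Ordinal H1)).
by rewrite !permKV.
Qed.

Lemma ab_neq n (p : 'S_n) j a b : valid_letter n j ->
  nat_of_ord (p a) = j.-1 -> nat_of_ord (p b) = j -> a != b.
Proof.
case/andP=> H0 H1 Ha Hb; apply/eqP => E; rewrite E Hb in Ha; lia.
Qed.

Lemma ninvU n (p : 'S_n) j a b : valid_letter n j ->
  nat_of_ord (p a) = j.-1 -> nat_of_ord (p b) = j -> a < b ->
  ninv (p * sigma n j)%g = (ninv p).+1.
Proof.
move=> Hv Ha Hb Hab; rewrite /ninv; case: (stepU Hv Ha Hb Hab) => -> Hn.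
by rewrite cardsU1 Hn.
Qed.

Lemma ninvD n (p : 'S_n) j a b : valid_letter n j ->
  nat_of_ord (p a) = j.-1 -> nat_of_ord (p b) = j -> b < a ->
  (ninv (p * sigma n j)%g).+1 = ninv p.
Proof.
move=> Hv Ha Hb Hab; rewrite /ninv; case: (stepD Hv Ha Hb Hab) => -> Hn.
by rewrite [in RHS](cardsD1 (b, a)) Hn.
Qed.

Lemma ninv_le n (p : 'S_n) j : valid_letter n j ->
  ninv (p * sigma n j)%g <= (ninv p).+1.
Proof.
move=> Hv; case: (exists_ab p Hv) => a [b [Ha Hb]].
have Hn := ab_neq Hv Ha Hb; case: (ltngtP a b) => Hab.
- by rewrite (ninvU Hv Ha Hb Hab).
- by have := ninvD Hv Ha Hb Hab; lia.
- by move: Hn; rewrite (val_inj Hab) eqxx.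
Qed.

Lemma ninv_word n t : all (valid_letter n) t -> ninv (word_perm n t) <= size t.
Proof.
elim: t => [|j t IH] /=.
  by move=> _; rewrite /ninv leqn0 cards_eq0; apply/eqP/setP => -[x y]; rewrite invpE !perm1 inE; lia.
case/andP=> Hj Ht; have := ninv_le (word_perm n t) Hj; have := IH Ht; lia.
Qed.


Lemma incr_ge n (f : 'S_n) : (forall x y : 'I_n, x < y -> f x < f y) ->
  forall x : 'I_n, x <= f x.
Proof.
move=> Hf x; move: {2}(nat_of_ord x) (erefl (nat_of_ord x)) => k; elim: k x => [|k IH] x Hx.
  by rewrite Hx.
have Hk : k < n by have := ltn_ord x; lia.
have := IH (Ordinal Hk) erefl; have := Hf (Ordinal Hk) x; rewrite /= Hx => H1 H2.
have := H1 (ltnSn k); lia.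
Qed.

Lemma incr_id n (p : 'S_n) : (forall x y : 'I_n, x < y -> p x < p y) -> p = 1%g.
Proof.
move=> Hp; have Hq : forall x y : 'I_n, x < y -> (p^-1)%g x < (p^-1)%g y.
  move=> x y Hxy; case: (ltngtP ((p^-1)%g x) ((p^-1)%g y)) => // H.
  - by have := Hp _ _ H; rewrite !permKV; lia.
  - by have := val_inj H => /perm_inj E; rewrite E ltnn in Hxy.
apply/permP => x; rewrite perm1; apply: val_inj => /=.
have H1 := incr_ge Hp x; have H2 := incr_ge Hq (p x); rewrite permK in H2; lia.
Qed.

Lemma nat_descent (g : nat -> nat) u d : g (u + d) < g u ->
  exists k, u < k <= u + d /\ g k < g k.-1.
Proof.
elim: d => [|d IH]; first by rewrite addn0 ltnn.
move=> H; case: (ltnP (g (u + d)) (g u)) => H2.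
  by case: (IH H2) => k [Hk Hg]; exists k; split => //; lia.
exists (u + d.+1); split; first lia.
by rewrite addnS /=; rewrite addnS in H; lia.
Qed.

Lemma sigma2 n j : (sigma n j * sigma n j)%g = 1%g.
Proof.
case: n => [|m] /=; first by rewrite mulg1.
by case: ifP => _; rewrite ?tperm2 ?mulg1.
Qed.

Lemma descent n (p : 'S_n) : 0 < ninv p ->
  exists j a b, [/\ valid_letter n j, nat_of_ord (p a) = j.-1,
                    nat_of_ord (p b) = j & b < a].
Proof.
case/card_gt0P => -[x y]; rewrite invpE => /andP[Hxy Hp].
destruct n as [|m]; first by have := ltn_ord x.
pose g k := nat_of_ord ((p^-1)%g (inord k : 'I_m.+1)).
have Hu : g (p y) = y by rewrite /g inord_val permK.
have Hv : g (p y + (p x - p y)) = x by rewrite /g subnKC ?inord_val ?permK //; lia.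
have : g (p y + (p x - p y)) < g (p y) by rewrite Hu Hv.
case/nat_descent => k [Hk Hg].
have Hkm : k <= m by have := ltn_ord (p x); lia.
exists k, ((p^-1)%g (inord k.-1)), ((p^-1)%g (inord k)); split.
- by rewrite /valid_letter; lia.
- by rewrite permKV inordK //; lia.
- by rewrite permKV inordK //; lia.
- exact: Hg.
Qed.

Lemma canon n (p : 'S_n) : exists t, [/\ all (valid_letter n) t, word_perm n t = p & size t = ninv p].
Proof.
move: {2}(ninv p) (erefl (ninv p)) => k; elim: k p => [|k IH] p Hk.
  exists [::]; split => //=; apply/esym/incr_id => x y Hxy.
  case: (ltngtP (p x) (p y)) => // H.
  - have : (x, y) \in invp p by rewrite invpE Hxy H.
    by move: Hk; rewrite /ninv => /eqP; rewrite cards_eq0 => /eqP ->; rewrite inE.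
  - by have := val_inj H => /perm_inj E; rewrite E ltnn in Hxy.
have : 0 < ninv p by rewrite Hk.
case/descent => j [a [b [Hv Ha Hb Hab]]].
have := ninvD Hv Ha Hb Hab; rewrite Hk => -[] /IH [t [Ht Hw Hs]].
exists (j :: t); split => /=.
- by rewrite Hv Ht.
- by rewrite Hw -mulgA sigma2 mulg1.
- by rewrite Hs (ninvD Hv Ha Hb Hab).
Qed.


Definition CL n k (p : 'S_n) := [set x : 'I_n | (x < k) && (k <= p x)].
Definition CR n k (p : 'S_n) := [set y : 'I_n | (k <= y) && (p y < k)].

Lemma CLR n k (p : 'S_n) : #|CL k p| = #|CR k p|.
Proof.
pose Ls := [set x : 'I_n | x < k].
have HP : #|p @^-1: Ls| = #|Ls| by apply: card_preimset; apply: perm_inj.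
have E1 : Ls :\: p @^-1: Ls = CL k p.
  by apply/setP => x; rewrite !inE -leqNgt andbC.
have E2 : p @^-1: Ls :\: Ls = CR k p.
  by apply/setP => x; rewrite !inE -leqNgt andbC.
have := cardsID (p @^-1: Ls) Ls; have := cardsID Ls (p @^-1: Ls).
rewrite E1 E2 HP setIC => H1 H2; apply/eqP; rewrite -(eqn_add2l #|Ls :&: p @^-1: Ls|) H1 H2.
by [].
Qed.

Definition good n t := all (valid_letter n) t /\ ninv (word_perm n t) = size t.

Lemma reduced_good n (w : 'S_n) t : reduced_word w t -> good n t.
Proof.
case=> [[Hv Hw] Hmin]; split => //.
case: (canon w) => t0 [H0 H1 H2].
have := Hmin t0 (conj H0 H1); have := ninv_word Hv; rewrite Hw; lia.
Qed.

Lemma reduced_sub n (w : 'S_n) a c : reduced_word w (a ++ c) ->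
  reduced_word (word_perm n a) a /\ reduced_word (word_perm n c) c.
Proof.
case=> [[Hv Hw] Hmin]; move: (Hv); rewrite all_cat => /andP[Ha Hc]; split.
- split => // t' [Ht' Hw']; have := Hmin (t' ++ c); rewrite !size_cat.
  rewrite /is_word_of all_cat Ht' Hc word_perm_cat Hw' -word_perm_cat Hw.
  by move=> H; have := H (conj erefl erefl); lia.
- split => // t' [Ht' Hw']; have := Hmin (a ++ t'); rewrite !size_cat.
  rewrite /is_word_of all_cat Ht' Ha word_perm_cat Hw' -word_perm_cat Hw.
  by move=> H; have := H (conj erefl erefl); lia.
Qed.

Lemma good_cons n j c : good n (j :: c) ->
  [/\ good n c, valid_letter n j,
      (exists a b, [/\ nat_of_ord (word_perm n c a) = j.-1,
                      nat_of_ord (word_perm n c b) = j & a < b]) &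
      invp (word_perm n c) \subset invp (word_perm n (j :: c))].
Proof.
case=> /= /andP[Hj Hc] Hn.
have Hle := ninv_word Hc.
case: (exists_ab (word_perm n c) Hj) => a [b [Ha Hb]].
have Hab := ab_neq Hj Ha Hb.
case: (ltngtP a b) => H.
- have := ninvU Hj Ha Hb H; rewrite Hn => -[] Hn'.
  split => //; first by exists a, b.
  by case: (stepU Hj Ha Hb H) => -> _; apply: subsetUr.
- by have := ninvD Hj Ha Hb H; rewrite Hn; lia.
- by move: Hab; rewrite (val_inj H) eqxx.
Qed.

Lemma good_cat n a c : good n (a ++ c) ->
  good n c /\ invp (word_perm n c) \subset invp (word_perm n (a ++ c)).
Proof.
elim: a => [|j a IH] /=; first by move=> H; split.
case/good_cons => /IH [Hc Hs] _ _ Hs2; split => //.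
exact: subset_trans Hs Hs2.
Qed.


Lemma split_last (j : nat) b : j \in b -> exists b1 b2, b = b1 ++ j :: b2 /\ j \notin b2.
Proof.
elim: b => [|h b IH]; first by []. rewrite inE; case: (boolP (j \in b)) => Hb.
  by case: (IH Hb) => b1 [b2 [-> H]] _; exists (h :: b1), b2.
rewrite orbF => /eqP E; subst h; exists [::], b; split => //.
Qed.

Lemma split_first (j : nat) b : j \in b -> exists b1 b2, b = b1 ++ j :: b2 /\ j \notin b1.
Proof.
elim: b => [|h b IH]; first by []. rewrite inE; case: (eqVneq j h) => [->|Hjh] /=.
  by move=> _; exists [::], b.
by case/IH => b1 [b2 [-> H]]; exists (h :: b1), b2; rewrite inE negb_or Hjh.
Qed.

Lemma cL_pos n k (p : 'S_n) (y : 'I_n) : k <= y -> p y < k -> exists x : 'I_n, x < k /\ k <= p x.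
Proof.
move=> H1 H2; have : 0 < #|CR k p| by apply/card_gt0P; exists y; rewrite inE H1 H2.
by rewrite -CLR => /card_gt0P [x]; rewrite inE => /andP[]; exists x.
Qed.

Lemma cR_pos n k (p : 'S_n) (x : 'I_n) : x < k -> k <= p x -> exists y : 'I_n, k <= y /\ p y < k.
Proof.
move=> H1 H2; have : 0 < #|CL k p| by apply/card_gt0P; exists x; rewrite inE H1 H2.
by rewrite CLR => /card_gt0P [y]; rewrite inE => /andP[]; exists y.
Qed.

Lemma G n b j : good n b -> valid_letter n j -> j \in b ->
  exists x : 'I_n, x < j /\ j <= word_perm n b x.
Proof.
move=> Hg Hj /split_last [b1 [b2 [Eb Hn]]]; subst b.
case/good_cat: Hg => Hg2 Hsub.
case/good_cons: (Hg2) => Hg3 _ [x [y [Hx Hy Hxy]]] Hsub2.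
have Hv2 : all (valid_letter n) b2 by case: Hg3.
have Hxj : x < j by rewrite -(pres x Hv2 Hn) Hx; case/andP: Hj; lia.
have Hyj : j <= y by rewrite leqNgt -(pres y Hv2 Hn) Hy ltnn.
have Hin : (x, y) \in invp (word_perm n (j :: b2)).
  rewrite invpE Hxy !word_perm_cons !sigmaE // Hx Hy /fs eqxx.
  case/andP: Hj => H0 _; have E : (j == j.-1) = false by apply/eqP; lia.
  rewrite E eqxx; lia.
have := subsetP Hsub _ Hin; rewrite invpE => /andP[_ Hlt].
case: (leqP j (word_perm n (b1 ++ j :: b2) x)) => H; first by exists x.
apply: (@cL_pos _ _ _ y) => //; lia.
Qed.

Definition Uniq n i (w : 'S_n) :=
  (forall x1 x2 : 'I_n, x1 < i -> x2 < i -> i <= w x1 -> i <= w x2 -> x1 = x2) /\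
  (forall y1 y2 : 'I_n, i <= y1 -> i <= y2 -> w y1 < i -> w y2 < i -> y1 = y2).

Lemma uniq_snap n i (w p : 'S_n) : Uniq i w -> invp p \subset invp w -> Uniq i p.
Proof.
move=> [UL UR] Hs.
have Tr : forall x y : 'I_n, x < i -> i <= y -> p y < i -> i <= p x -> w y < w x.
  move=> x y H1 H2 H3 H4.
  have : (x, y) \in invp p by rewrite invpE; apply/andP; split; lia.
  by move/(subsetP Hs); rewrite invpE => /andP[].
split.
- have One : forall x : 'I_n, x < i -> i <= p x -> w x < i -> 1 < #|CR i p| -> False.
    move=> x H1 H2 H3 /card_gt1P [q1 [q2 [Hq1 Hq2 Hq]]].
    move: Hq1 Hq2; rewrite !inE => /andP[Hq1a Hq1b] /andP[Hq2a Hq2b].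
    have := Tr _ _ H1 Hq1a Hq1b H2; have := Tr _ _ H1 Hq2a Hq2b H2 => E2 E1.
    by move: Hq; rewrite (UR _ _ Hq1a Hq2a) ?eqxx //; lia.
  move=> x1 x2 H1 H2 H3 H4; apply/eqP/negP => Hne; move/negP: Hne => Hne.
  have : 1 < #|CL i p| by apply/card_gt1P; exists x1, x2; rewrite !inE H1 H2 H3 H4.
  rewrite CLR.
  case: (ltnP (w x1) i) => Hw1; first exact: One H1 H3 Hw1.
  case: (ltnP (w x2) i) => Hw2; first exact: One H2 H4 Hw2.
  by move: Hne; rewrite (UL _ _ H1 H2 Hw1 Hw2) eqxx.
- have One : forall y : 'I_n, i <= y -> p y < i -> i <= w y -> 1 < #|CL i p| -> False.
    move=> y H1 H2 H3 /card_gt1P [q1 [q2 [Hq1 Hq2 Hq]]].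
    move: Hq1 Hq2; rewrite !inE => /andP[Hq1a Hq1b] /andP[Hq2a Hq2b].
    have := Tr _ _ Hq1a H1 H2 Hq1b; have := Tr _ _ Hq2a H1 H2 Hq2b => E2 E1.
    by move: Hq; rewrite (UL _ _ Hq1a Hq2a) ?eqxx //; lia.
  move=> y1 y2 H1 H2 H3 H4; apply/eqP/negP => Hne; move/negP: Hne => Hne.
  have : 1 < #|CR i p| by apply/card_gt1P; exists y1, y2; rewrite !inE H1 H2 H3 H4.
  rewrite -CLR.
  case: (leqP i (w y1)) => Hw1; first exact: One H1 H3 Hw1.
  case: (leqP i (w y2)) => Hw2; first exact: One H2 H4 Hw2.
  by move: Hne; rewrite (UR _ _ H1 H2 Hw1 Hw2) eqxx.
Qed.


Lemma unconf_dec (i : nat) a r : i \notin a ->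
  unconfined i (a ++ i :: r) =
  ~~ ((i.+1 \in a) && (i.+1 \in r)) && ~~ ((i.-1 \in a) && (i.-1 \in r)).
Proof.
move=> Ha; rewrite /unconfined /between (index_pivot _ Ha) take_size_cat //.
by rewrite -cat_rcons drop_size_cat ?size_rcons.
Qed.

Lemma wdec n a (i : nat) r x :
  word_perm n (a ++ i :: r) x = word_perm n a (sigma n i (word_perm n r x)).
Proof. by rewrite word_perm_cat permM word_perm_cons. Qed.

Lemma crossL n i a r (x : 'I_n) : valid_letter n i -> all (valid_letter n) a ->
  all (valid_letter n) r -> i \notin a -> i \notin r -> x < i ->
  i <= word_perm n (a ++ i :: r) x -> nat_of_ord (word_perm n r x) = i.-1.
Proof.
move=> Hi Ha Hr Hia Hir Hx; rewrite wdec leqNgt (pres _ Ha Hia) -leqNgt sigmaE //.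
have := pres x Hr Hir; rewrite Hx /fs => HB.
case: eqP => // _; case: eqP => [E|_]; lia.
Qed.

Lemma crossR n i a r (x : 'I_n) : valid_letter n i -> all (valid_letter n) a ->
  all (valid_letter n) r -> i \notin a -> i \notin r -> i <= x ->
  word_perm n (a ++ i :: r) x < i -> nat_of_ord (word_perm n r x) = i.
Proof.
move=> Hi Ha Hr Hia Hir Hx; rewrite wdec (pres _ Ha Hia) sigmaE //.
have := pres x Hr Hir; rewrite [x < i]ltnNge Hx /fs => HB.
case/andP: Hi => H0 H1.
case: eqP => [E|_]; first lia. case: eqP => // _; lia.
Qed.

Definition CondLR n i (w : 'S_n) := forall p0 q0 : 'I_n,
  p0 < i -> i <= w p0 -> i <= q0 -> w q0 < i ->
  (nat_of_ord (w q0) = i.-1 \/ nat_of_ord p0 = i.-1) /\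
  (nat_of_ord (w p0) = i \/ nat_of_ord q0 = i).

Lemma from_s n (w : 'S_n) i s : reduced_word w s -> count_mem i s = 1 ->
  unconfined i s ->
  [/\ valid_letter n i, Uniq i w, CondLR i w &
      exists p0 : 'I_n, p0 < i /\ i <= w p0].
Proof.
move=> Hred Hc Hu.
have Hg := reduced_good Hred.
have His : i \in s by rewrite -has_pred1 has_count Hc.
have Hvi : valid_letter n i by case: Hg => /allP H _; exact: H _ His.
case: (split_first His) => a [r [Es Hia]]; subst s.
have Hir : i \notin r.
  apply/count_memPn; move: Hc; rewrite count_cat /= eqxx.
  by have /count_memPn -> := Hia; lia.
move: Hu; rewrite unconf_dec // => /andP[Hu1 Hu2].
case: (Hred) => [[Hv Hw] _]; move: Hv; rewrite all_cat /= => /andP[Ha /andP[_ Hr]].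
have cL := fun x => @crossL n i a r x Hvi Ha Hr Hia Hir.
have cR := fun x => @crossR n i a r x Hvi Ha Hr Hia Hir.
rewrite Hw in cL cR.
split => //.
- split.
  + move=> x1 x2 H1 H2 H3 H4; apply: (@perm_inj _ (word_perm n r)); apply: val_inj.
    by rewrite /= (cL _ H1 H3) (cL _ H2 H4).
  + move=> x1 x2 H1 H2 H3 H4; apply: (@perm_inj _ (word_perm n r)); apply: val_inj.
    by rewrite /= (cR _ H1 H3) (cR _ H2 H4).
- move=> p0 q0 H1 H2 H3 H4.
  have Bp := cL _ H1 H2; have Bq := cR _ H3 H4.
  have Hi0 : 0 < i by case/andP: Hvi.
  split.
  + case Hr1 : (i.-1 \in r).
    * have Ha1 : i.-1 \notin a by move: Hu2; rewrite Hr1 andbT.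
      have Ho : nat_of_ord (sigma n i (word_perm n r q0)) = i.-1.
        by rewrite sigmaE // Bq /fs ifF ?eqxx //; apply/eqP; lia.
      have Hfix : word_perm n a (sigma n i (word_perm n r q0)) = sigma n i (word_perm n r q0).
        by apply: (@fixk n i.-1) => //; rewrite prednK.
      by left; rewrite -Hw wdec Hfix Ho.
    * right; have Hfix := @fixk n i.-1 r (word_perm n r p0) Hr (negbT Hr1).
      rewrite prednK // in Hfix; have := Hfix Hir Bp => /perm_inj <-; exact: Bp.
  + case Hr1 : (i.+1 \in r).
    * have Ha1 : i.+1 \notin a by move: Hu1; rewrite Hr1 andbT.
      have Ho : nat_of_ord (sigma n i (word_perm n r p0)) = i.
        by rewrite sigmaE // Bp /fs eqxx.
      have Hfix : word_perm n a (sigma n i (word_perm n r p0)) = sigma n i (word_perm n r p0).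
        by apply: (@fixk n i).
      by left; rewrite -Hw wdec Hfix Ho.
    * right; have Hfix := @fixk n i r (word_perm n r q0) Hr Hir (negbT Hr1) Bq.
      by move/perm_inj: Hfix => <-.
- have Hgw := Hg; rewrite /good Hw in Hgw.
  by have := G Hg Hvi His; rewrite -/(word_perm n _) Hw.
Qed.


Lemma inv_sub n (p w : 'S_n) (x y : 'I_n) : invp p \subset invp w ->
  x < y -> p y < p x -> w y < w x.
Proof.
move=> Hs H1 H2; have : (x, y) \in invp p by rewrite invpE H1 H2.
by move/(subsetP Hs); rewrite invpE => /andP[].
Qed.

Lemma notinv_sub n (p w : 'S_n) (x y : 'I_n) : invp p \subset invp w ->
  x < y -> w x < w y -> p x < p y.
Proof.
move=> Hs H1 H2; rewrite ltnNge leq_eqVlt negb_or; apply/andP; split.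
  apply/eqP => E; have E2 : x = y by apply: (@perm_inj _ p); apply: val_inj.
  by rewrite E2 ltnn in H1.
by apply/negP => H3; have := inv_sub Hs H1 H3; lia.
Qed.

Lemma event_cross n i (w p : 'S_n) (x y : 'I_n) :
  valid_letter n i -> Uniq i w -> CondLR i w ->
  invp (p * sigma n i)%g \subset invp w ->
  x < y -> nat_of_ord (p x) = i.-1 -> nat_of_ord (p y) = i -> x < i <= y.
Proof.
move=> Hvi Uw HC Hs Hxy Hx Hy.
have Hi0 : 0 < i by case/andP: Hvi.
have [p' Ep'] : {p' : 'S_n | p' = (p * sigma n i)%g} by exists (p * sigma n i)%g.
rewrite -Ep' in Hs.
have Up := uniq_snap Uw Hs.
case: Uw => [UwL UwR]; case: Up => [UpL UpR].
have Hx' : nat_of_ord (p' x) = i by rewrite Ep' permM sigmaE // Hx /fs eqxx.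
have Hy' : nat_of_ord (p' y) = i.-1.
  by rewrite Ep' permM sigmaE // Hy /fs ifF ?eqxx //; apply/eqP; lia.
have Ixy := inv_sub Hs Hxy (ltac:(rewrite Hx' Hy'; lia)).
case: (ltnP y i) => Hyi.
-
  exfalso.
  have [q [Hq1 Hq2]] := @cR_pos n i p' x (ltac:(lia)) (ltac:(rewrite Hx'; lia)).
  have Hqy : nat_of_ord (p' q) <> i.-1.
    move=> E; have : q = y by apply: (@perm_inj _ p'); apply: val_inj; rewrite /= E Hy'.
    by move=> E2; rewrite E2 in Hq1; lia.
  have Hyq : y < q by lia.
  have Iyq := inv_sub Hs Hyq (ltac:(rewrite Hy'; lia)).
  have Hwy : w y < i.
    rewrite ltnNge; apply/negP => H; have := UwL _ _ (ltac:(lia) : x < i) Hyi (ltac:(lia)) H.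
    by move=> E; rewrite E ltnn in Hxy.
  have [p0 [Hp1 Hp2]] := @cL_pos n i w q Hq1 (ltac:(lia)).
  case: (HC p0 q Hp1 Hp2 Hq1 (ltac:(lia))) => -[E|E] _; first lia.
  have Hyp0 : y < p0.
    case: (ltngtP y p0) => // H; first lia.
    by have E3 := val_inj H; rewrite E3 in Hwy; lia.
  have Hp0 : p' y < p' p0 := notinv_sub Hs Hyp0 (ltac:(lia)).
  have := UpL x p0 (ltac:(lia)) Hp1 (ltac:(lia)) (ltac:(lia)).
  by move=> E3; rewrite E3 in Hxy; lia.
- case: (ltnP x i) => Hxi; first by apply/andP.
  exfalso.
  have [z [Hz1 Hz2]] := @cL_pos n i p' y Hyi (ltac:(lia)).
  have Hzx : nat_of_ord (p' z) <> i.
    move=> E; have : z = x by apply: (@perm_inj _ p'); apply: val_inj; rewrite /= E Hx'.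
    by move=> E2; rewrite E2 in Hz1; lia.
  have Hzx' : z < x by lia.
  have Izx := inv_sub Hs Hzx' (ltac:(rewrite Hx'; lia)).
  have Hwx : i <= w x.
    rewrite leqNgt; apply/negP => H; have := UwR _ _ Hxi Hyi H (ltac:(lia)).
    by move=> E; rewrite E ltnn in Hxy.
  have [q0 [Hq1 Hq2]] := @cR_pos n i w z Hz1 (ltac:(lia)).
  case: (HC z q0 Hz1 (ltac:(lia)) Hq1 Hq2) => _ [E|E]; first lia.
  have Hq0x : q0 < x.
    case: (ltngtP q0 x) => // H; first lia.
    by have E3 := val_inj H; rewrite E3 in Hq2; lia.
  have Hp0 : p' q0 < p' x := notinv_sub Hs Hq0x (ltac:(lia)).
  have := UpR q0 y Hq1 Hyi (ltac:(rewrite Hx' in Hp0; have : nat_of_ord (p' q0) != i; [apply/eqP => E4; have : q0 = x by apply: (@perm_inj _ p'); apply: val_inj; rewrite /= E4 Hx'|]; lia)) (ltac:(lia)).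
  by move=> E3; rewrite E3 in Hq0x; lia.
Qed.


Lemma ord_eq n (p : 'S_n) (x y : 'I_n) : nat_of_ord (p x) = nat_of_ord (p y) -> x = y.
Proof. by move=> H; apply: (@perm_inj _ p); apply: val_inj. Qed.

Lemma to_t n (w : 'S_n) i t : valid_letter n i -> Uniq i w -> CondLR i w ->
  (exists p0 : 'I_n, p0 < i /\ i <= w p0) -> reduced_word w t ->
  count_mem i t = 1 /\ unconfined i t.
Proof.
move=> Hvi Uw HC [p0 [Hp1 Hp2]] Hred.
have Hg := reduced_good Hred.
case: (Hred) => [[Hv Hw] _].
have Hi0 : 0 < i by case/andP: Hvi.
have Hit : i \in t.
  apply/negPn/negP => Hn; have := pres p0 Hv Hn; rewrite Hw Hp1; lia.
case: (split_first Hit) => a [r [Et Hia]]; subst t.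
have Hir : i \notin r.
  apply/negP => Hin; case: (split_first Hin) => m [c [Er _]]; subst r.
  case/good_cat: Hg => Hg1 S1; rewrite Hw in S1.
  case/good_cons: Hg1 => Hg2 _ [xB [yB [HxB HyB HxyB]]] S2.
  case/good_cat: Hg2 => Hg3 S3.
  case/good_cons: Hg3 => _ _ [xA [yA [HxA HyA HxyA]]] S4.
  have SA : invp (word_perm n (i :: c)) \subset invp w.
    exact: subset_trans S3 (subset_trans S2 S1).
  have /andP[HxAi HyAi] := event_cross Hvi Uw HC SA HxyA HxA HyA.
  have /andP[HxBi HyBi] := event_cross Hvi Uw HC S1 HxyB HxB HyB.
  have [UpL UpR] := uniq_snap Uw S1.
  have HxA' : nat_of_ord (word_perm n (i :: c) xA) = i by rewrite word_perm_cons sigmaE // HxA /fs eqxx.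
  have HyA' : nat_of_ord (word_perm n (i :: c) yA) = i.-1.
    by rewrite word_perm_cons sigmaE // HyA /fs ifF ?eqxx //; apply/eqP; lia.
  have I1 := inv_sub S3 HxyA (ltac:(rewrite HxA' HyA'; lia)).
  have EB : forall z, nat_of_ord (word_perm n (i :: m ++ i :: c) z) = fs i ((word_perm n (m ++ i :: c)) z).
    by move=> z; rewrite word_perm_cons sigmaE.
  have HxB' : nat_of_ord (word_perm n (i :: m ++ i :: c) xB) = i by rewrite EB HxB /fs eqxx.
  have HyB' : nat_of_ord (word_perm n (i :: m ++ i :: c) yB) = i.-1.
    by rewrite EB HyB /fs ifF ?eqxx //; apply/eqP; lia.
  case: (leqP i ((word_perm n (m ++ i :: c)) xA)) => H.
  - have Hne : nat_of_ord ((word_perm n (m ++ i :: c)) xA) <> i.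
      by move=> E; have := ord_eq (etrans E (esym HyB)) => E2; rewrite E2 in HxAi; lia.
    have HxA2 : nat_of_ord (word_perm n (i :: m ++ i :: c) xA) = (word_perm n (m ++ i :: c)) xA.
      by rewrite EB /fs; case: eqP => [E|_]; [lia | case: eqP].
    have H1 : i <= word_perm n (i :: m ++ i :: c) xA by rewrite HxA2.
    have H2 : i <= word_perm n (i :: m ++ i :: c) xB by rewrite HxB'.
    have E := UpL xA xB HxAi HxBi H1 H2.
    by rewrite E HxB in H; move: H Hi0; clear; lia.
  - have Hlt : word_perm n (m ++ i :: c) yA < i.-1 by move: I1 H; clear; lia.
    have HyA2 : nat_of_ord (word_perm n (i :: m ++ i :: c) yA) = (word_perm n (m ++ i :: c)) yA.
      rewrite EB /fs; case: eqP => [E|_]; first by move: E Hlt; clear; lia.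
      by case: eqP => [E|_] //; move: E Hlt; clear; lia.
    have H1 : word_perm n (i :: m ++ i :: c) yA < i by rewrite HyA2; move: Hlt; clear; lia.
    have H2 : word_perm n (i :: m ++ i :: c) yB < i by rewrite HyB'; move: Hi0; clear; lia.
    have E := UpR yA yB HyAi HyBi H1 H2.
    by rewrite E HyB in I1; move: I1 H; clear; lia.
split.
  by rewrite count_cat /= eqxx; have /count_memPn -> := Hia; have /count_memPn -> := Hir.
rewrite unconf_dec //.
have [Ra Rir] := reduced_sub Hred.
have [_ Rr] := reduced_sub (a := [:: i]) Rir.
have Gga := reduced_good Ra; have Ggr := reduced_good Rr.
move: (Hv); rewrite all_cat /= => /andP[Ha /andP[_ Hr]].
have cL := fun x => @crossL n i a r x Hvi Ha Hr Hia Hir.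
have cR := fun x => @crossR n i a r x Hvi Ha Hr Hia Hir.
rewrite Hw in cL cR.
have [q0 [Hq1 Hq2]] := @cR_pos n i w p0 Hp1 Hp2.
have Bp := cL _ Hp1 Hp2; have Bq := cR _ Hq1 Hq2.
have Wd : forall z, word_perm n a (sigma n i (word_perm n r z)) = w z.
  by move=> z; rewrite -Hw wdec.
have Fpq : nat_of_ord q0 = i -> i.+1 \in r -> False.
  move=> Eq Hin; have Hv1 : valid_letter n i.+1 by move/allP: Hr; apply.
  have [x [Hx1 Hx2]] := G Ggr Hv1 Hin.
  case: (ltnP x i) => Hxi.
    by have := pres x Hr Hir; rewrite Hxi; move: Hx2; clear; lia.
  have Ex : x = q0 by apply: val_inj; move: Hx1 Hxi Eq; clear; simpl; lia.
  by rewrite Ex Bq in Hx2; move: Hx2; clear; lia.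
have Fpw : nat_of_ord (w p0) = i -> i.+1 \in a -> False.
  move=> Ew Hin; have Hv1 : valid_letter n i.+1 by move/allP: Ha; apply.
  have Ho : nat_of_ord (sigma n i (word_perm n r p0)) = i by rewrite sigmaE // Bp /fs eqxx.
  have [x [Hx1 Hx2]] := G Gga Hv1 Hin.
  case: (ltnP x i) => Hxi.
    by have := pres x Ha Hia; rewrite Hxi; move: Hx2; clear; lia.
  have Ex : x = sigma n i (word_perm n r p0) by apply: val_inj; move: Hx1 Hxi Ho; clear; simpl; lia.
  by rewrite Ex Wd Ew in Hx2; move: Hx2; clear; lia.
have Fmp : nat_of_ord p0 = i.-1 -> i.-1 \in r -> False.
  move=> Ep Hin; have Hv2 : valid_letter n i.-1 by move/allP: Hr; apply.
  have [x [Hx1 Hx2]] := G Ggr Hv2 Hin.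
  have Hxi : x < i by move: Hx1; clear; lia.
  have := pres x Hr Hir; rewrite Hxi => Hb.
  have Ex : x = p0 by apply: (ord_eq (p := word_perm n r)); rewrite Bp; move: Hb Hx2; clear; lia.
  by rewrite Ex Ep in Hx1; move: Hx1; clear; lia.
have Fmw : nat_of_ord (w q0) = i.-1 -> i.-1 \in a -> False.
  move=> Ew Hin; have Hv2 : valid_letter n i.-1 by move/allP: Ha; apply.
  have Ho : nat_of_ord (sigma n i (word_perm n r q0)) = i.-1.
    by rewrite sigmaE // Bq /fs ifF ?eqxx //; apply/eqP; move: Hi0; clear; lia.
  have [x [Hx1 Hx2]] := G Gga Hv2 Hin.
  have Hxi : x < i by move: Hx1; clear; lia.
  have := pres x Ha Hia; rewrite Hxi => Hb.
  have Ex : x = sigma n i (word_perm n r q0).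
    by apply: (ord_eq (p := word_perm n a)); rewrite Wd Ew; move: Hb Hx2; clear; lia.
  by rewrite Ex Ho in Hx1; move: Hx1; clear; lia.
have [[CL1|CL2] [CR1|CR2]] := HC p0 q0 Hp1 Hp2 Hq1 Hq2.
all: apply/andP; split; apply/negP => /andP[H1 H2].
all: first [exact: Fpq CR2 H2 | exact: Fpw CR1 H1 | exact: Fmp CL2 H2 | exact: Fmw CL1 H1].
Qed.

Unset Implicit Arguments.

Theorem lemma2p8 (n : nat) (w : 'S_n) (i : nat) :
  in_supp w i ->
  (exists s, reduced_word w s /\ count_mem i s = 1 /\ unconfined i s) ->
  forall t, reduced_word w t -> count_mem i t = 1 /\ unconfined i t.
Proof.
move=> _ [s [Hs [Hc Hu]]] t Ht.
have [Hvi Uw HC Hp] := from_s Hs Hc Hu.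
exact: to_t Hvi Uw HC Hp Ht.
Qed.
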